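(* Let $S_\omega$ and $S_{\omega'}$ be standard graded skew polynomial algebras in $n$ variables at cube roots of unity. Then the following are equivalent: (i) the point simplicial complexes $\Delta_\omega$ and $\Delta_{\omega'}$ are isomorphic; (ii) there exists a permutation $\sigma\in\mathfrak{S}_n$ such that, for every $v\in[n]$, $\sigma$ is an isomorphism from the underlying graph of $I_v(M_\omega)$ to the underlying graph of $I_{\sigma(v)}(M_{\omega'})$.
   Context: Let $k$ be an algebraically closed field of characteristic $0$; fix a primitive cube root of unity $\zeta_3$. For $\omega=(\omega_{ij})$ with $\omega_{ii}=1$, $\omega_{ij}\omega_{ji}=1$, all cube roots of unity, $S_\omega=k\langle x_1,\dots,x_n\rangle/(x_ix_j-\omega_{ij}x_jx_i)$ with $\deg x_i=1$; its E-matrix is $M_\omega=(m_{ij})$ over $\mathbb{Z}/3\mathbb{Z}$ with $\omega_{ij}=\zeta_3^{m_{ij}}$ (viewed as a digraph on $[n]$ with an edge $i\to j$ iff $m_{ij}=1$). The point simplicial complex $\Delta_\omega$ has vertex set $[n]$ and faces the $F\subset[n]$ with $\omega_{ij}\omega_{jh}\omega_{hi}=1$ for all distinct $i,j,h\in F$; isomorphism of simplicial complexes means a bijection of vertex sets inducing a bijection of facets. For $v\in[n]$ let $X_v$ be the matrix with $(X_v)_{iv}=1$, $(X_v)_{vi}=-1$ for $i\ne v$ and other entries $0$. The isolation $I_v(M)$ of a skew-symmetric $M$ over $\mathbb{Z}/3\mathbb{Z}$ at $v$ is the unique matrix of the form $M+\sum_{u=1}^n a_uX_u$ ($a_u\in\mathbb{Z}/3\mathbb{Z}$)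 whose $v$-th row and column are zero (i.e., $v$ is an isolated vertex). The underlying graph of a skew-symmetric $N=(n_{ij})$ is the simple undirected graph on $[n]$ with $i,j$ adjacent iff $n_{ij}\ne0$. *)

(* Defs.v *)
From HB Require Import structures.
From mathcomp Require Import all_boot all_order all_algebra all_fingroup.
Set Implicit Arguments. Unset Strict Implicit. Unset Printing Implicit Defensive.
Import Order.TTheory GRing.Theory.
Local Open Scope ring_scope.

Section Defs.
Variables (k : fieldType) (n : nat).

Definition cube_root_param (w : 'M[k]_n) : Prop :=
  [/\ forall i, w i i = 1,
      forall i j, w i j * w j i = 1
    & forall i j, (w i j) ^+ 3 = 1].

Definition Emat (zeta : k) (w : 'M[k]_n) : 'M['Z_3]_n :=
  \matrix_(i, j) odflt 0 [pick m : 'Z_3 | zeta ^+ (m : nat) == w i j].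

Definition is_face (w : 'M[k]_n) (F : {set 'I_n}) : bool :=
  [forall i in F, forall j in F, forall h in F,
     [&& i != j, j != h & h != i] ==> (w i j * w j h * w h i == 1)].

Definition is_facet (w : 'M[k]_n) (F : {set 'I_n}) : bool :=
  is_face w F && [forall G : {set 'I_n}, (is_face w G && (F \subset G)) ==> (G == F)].

Definition complex_iso (w w' : 'M[k]_n) : Prop :=
  exists s : 'S_n, forall F : {set 'I_n}, is_facet w F = is_facet w' (s @: F).
End Defs.

Section Iso.
Variable n : nat.

Definition Xmat (v : 'I_n) : 'M['Z_3]_n :=
  \matrix_(i, j) (if (j == v) && (i != v) then 1
                  else if (i == v) && (j != v) then -1 else 0).

(* N is the isolation I_v(M): N is of the form M + sum_u a_u X_u and has
   its v-th row and column zero (such N is unique) *)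
Definition is_isolation (M : 'M['Z_3]_n) (v : 'I_n) (N : 'M['Z_3]_n) : Prop :=
  (exists a : 'I_n -> 'Z_3, N = M + \sum_(u < n) a u *: Xmat u) /\
  (forall i, N v i = 0 /\ N i v = 0).

Definition graph_iso (s : 'S_n) (N N' : 'M['Z_3]_n) : Prop :=
  forall i j, (N i j != 0) = (N' (s i) (s j) != 0).
End Iso.

(* Main.v *)
Require Import Defs.
From HB Require Import structures.
From mathcomp Require Import all_boot all_order all_algebra all_fingroup.
From mathcomp Require Import ring.
Import GRing.Theory.
Local Open Scope ring_scope.
Set Implicit Arguments. Unset Strict Implicit.

Section Aux.
Variables (k : fieldType) (zeta : k) (hzeta : 3.-primitive_root zeta) (n : nat).

Definition phi (m : 'Z_3) : k := zeta ^+ (m : nat).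

Lemma phiD a b : phi (a + b) = phi a * phi b.
Proof. by rewrite /phi -exprD /= (prim_expr_mod hzeta). Qed.

Lemma phi0 : phi 0 = 1.
Proof. by rewrite /phi expr0. Qed.

Lemma phi_inj : injective phi.
Proof.
move=> a b /eqP; rewrite /phi (eq_prim_root_expr hzeta) => /eqP.
rewrite !modn_small ?ltn_ord // => h; exact: val_inj.
Qed.

Variables (w : 'M[k]_n) (hw : cube_root_param w).
Let E := Emat zeta w.

Lemma phiE i j : phi (E i j) = w i j.
Proof.
rewrite /E /Emat mxE; case: pickP => [m /eqP //|H].
case: hw => _ _ h3.
have [m Hm] := prim_rootP hzeta (h3 i j).
by move: (H m); rewrite Hm eqxx.
Qed.

Lemma Eskew i j : E j i = - E i j.
Proof.
case: hw => _ h2 _.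
apply/eqP; rewrite -addr_eq0; apply/eqP/phi_inj.
by rewrite phiD !phiE phi0 h2.
Qed.

Lemma Ediag i : E i i = 0.
Proof. case: hw => h1 _ _; apply: phi_inj; by rewrite phiE phi0 h1. Qed.

Definition te i j h := E i j + E j h + E h i.

Lemma Pte i j h : (w i j * w j h * w h i == 1) = (te i j h == 0).
Proof. by rewrite /te -!phiE -!phiD -phi0 (inj_eq phi_inj). Qed.

Lemma teC i j h : te i j h = te j h i.
Proof. by rewrite /te [RHS]addrC addrA. Qed.

Lemma teS i j h : te j i h = - te i j h.
Proof.
rewrite /te (Eskew i j) (Eskew j h) (Eskew h i); ring.
Qed.

Lemma te_deg1 i h : te i i h = 0.
Proof. rewrite /te Ediag (Eskew h i); ring. Qed.
Lemma te_deg2 i h : te i h h = 0.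
Proof. by rewrite teC te_deg1. Qed.
Lemma te_deg3 i h : te i h i = 0.
Proof. by rewrite -teC te_deg1. Qed.

Definition P i j h := te i j h == 0.

Lemma PC i j h : P i j h = P j h i.
Proof. by rewrite /P teC. Qed.
Lemma PS i j h : P j i h = P i j h.
Proof. by rewrite /P teS oppr_eq0. Qed.

Lemma faceP (F : {set 'I_n}) : reflect (forall i j h, i \in F -> j \in F -> h \in F -> P i j h)
   (is_face w F).
Proof.
apply: (iffP forallP) => [H i j h Hi Hj Hh | H i].
  have := H i; rewrite Hi /= => /forallP /(_ j); rewrite Hj /=.
  move=> /forallP /(_ h); rewrite Hh /= Pte => /implyP H'.
  case: (boolP [&& i != j, j != h & h != i]) => [/H' //|].
  rewrite /P -!negb_or !negbK => /or3P [] /eqP ->;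
    by rewrite ?te_deg1 ?te_deg2 ?te_deg3.
apply/implyP => Hi; apply/forallP => j; apply/implyP => Hj.
apply/forallP => h; apply/implyP => Hh; apply/implyP => _.
by rewrite Pte; apply: H.
Qed.

Lemma in3 (x i j h : 'I_n) : x \in [set i; j; h] -> [\/ x = i, x = j | x = h].
Proof. by rewrite !inE => /orP [/orP [] |] /eqP ->; [constructor 1|constructor 2|constructor 3]. Qed.

Lemma face3 i j h : is_face w [set i; j; h] = P i j h.
Proof.
apply/faceP/idP => [H|H x y z]; first by apply: H; rewrite !inE eqxx ?orbT.
have D1 a b : P a a b by rewrite /P te_deg1.
have D2 a b : P a b b by rewrite /P te_deg2.
have D3 a b : P a b a by rewrite /P te_deg3.
move=> /in3 [] -> /in3 [] -> /in3 [] ->;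
  rewrite ?D1 ?D2 ?D3 //;
  first [ done | by rewrite PC | by rewrite -PC | by rewrite -PS
        | by rewrite -PS PC | by rewrite -PS -PC ].
Qed.

Lemma face_facet (F : {set 'I_n}) : is_face w F = [exists G, is_facet w G && (F \subset G)].
Proof.
apply/idP/existsP => [HF | [G /andP [/andP [HG _] sFG]]].
  have [G /maxsetP [HG Hmax] sFG] := maxset_exists (P := is_face w) HF.
  exists G; rewrite sFG andbT /is_facet HG /=.
  apply/forallP => G'; apply/implyP => /andP [HG' sGG'].
  by rewrite (Hmax G' HG' sGG').
apply/faceP => i j h Hi Hj Hh.
by move/faceP: HG; apply; apply: (subsetP sFG).
Qed.

Definition iso_mx v : 'M['Z_3]_n := \matrix_(i, j) te i j v.

Lemma sumX (a : 'I_n -> 'Z_3) i j :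
  (\sum_(u < n) a u *: Xmat u) i j = if i == j then 0 else a j - a i.
Proof.
rewrite summxE.
under eq_bigr => u _ do rewrite mxE /Xmat mxE.
case: eqP => [->|/eqP nij].
  by apply: big1 => u _; case: (j == u); rewrite /= ?mulr0.
transitivity (\sum_(u < n) ((if u == j then a u else 0) - (if u == i then a u else 0))).
  apply: eq_bigr => u _; rewrite (eq_sym u j) (eq_sym u i).
  case Hj: (j == u); case Hi: (i == u); rewrite /= ?mulr1 ?mulrN1 ?mulr0 ?subr0 ?sub0r ?oppr0 //.
  by move: nij; rewrite (eqP Hj) (eqP Hi) eqxx.
by rewrite sumrB -!big_mkcond /= !big_pred1_eq.
Qed.

Lemma isolation_eq v N : is_isolation E v N -> N = iso_mx v.
Proof.
move=> [[a ->] H].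
have Ha j : a j = a v - E v j.
  have := (H j).1; rewrite mxE sumX.
  case: eqP => [<-|_]; first by rewrite Ediag subr0.
  by move=> h; rewrite -[RHS]addr0 -h; ring.
apply/matrixP => i j; rewrite mxE [RHS]mxE sumX /te.
case: eqP => [->|_]; first by rewrite addr0 Ediag (Eskew j v); ring.
rewrite (Ha i) (Ha j) (Eskew j v); ring.
Qed.

Lemma isolation_ex v : is_isolation E v (iso_mx v).
Proof.
split.
  exists (fun u => E u v); apply/matrixP => i j; rewrite [LHS]mxE mxE sumX /te.
  case: eqP => [->|_]; first by rewrite Ediag (Eskew j v); ring.
  by rewrite (Eskew i v); ring.
by move=> i; rewrite !mxE te_deg3 te_deg2.
Qed.

End Aux.

Section Perm.
Variable n : nat.
Implicit Types (s : 'S_n) (F G : {set 'I_n}).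

Lemma imK s G : s @: ((s^-1)%g @: G) = G.
Proof.
rewrite -imset_comp -[RHS]imset_id; apply: eq_imset => x /=; by rewrite permKV.
Qed.

Lemma subS s F G : (s @: F \subset s @: G) = (F \subset G).
Proof.
apply/idP/idP => [H|]; last exact: imsetS.
apply/subsetP => x Hx.
have: s x \in s @: G by apply: (subsetP H); rewrite mem_imset //; exact: perm_inj.
by rewrite mem_imset //; exact: perm_inj.
Qed.

Lemma eqS s F G : (s @: G == s @: F) = (G == F).
Proof. by rewrite (inj_eq (imset_inj (@perm_inj _ s))). Qed.
End Perm.

Unset Implicit Arguments.
Theorem proposition5p4 (k : closedFieldType) (hk : [pchar k] =i pred0)
    (zeta : k) (hzeta : 3.-primitive_root zeta) (n : nat)
    (w w' : 'M[k]_n) (hw : cube_root_param w) (hw' : cube_root_param w') :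
  complex_iso w w' <->
  (exists s : 'S_n, forall (v : 'I_n) (N N' : 'M['Z_3]_n),
      is_isolation (Emat zeta w) v N ->
      is_isolation (Emat zeta w') (s v) N' ->
      graph_iso s N N').
Proof.
pose Q (s : 'S_n) := forall i j h,
  P zeta w i j h = P zeta w' (s i) (s j) (s h).
have B : (exists s : 'S_n, forall (v : 'I_n) (N N' : 'M['Z_3]_n),
      is_isolation (Emat zeta w) v N ->
      is_isolation (Emat zeta w') (s v) N' ->
      graph_iso s N N') <-> exists s, Q s.
  split=> [[s H]|[s H]]; exists s.
    move=> i j h.
    have := H h _ _ (isolation_ex hzeta hw h) (isolation_ex hzeta hw' (s h)) i j.
    by rewrite !mxE /P => /(congr1 negb); rewrite !negbK.
  move=> v N N' /(isolation_eq hzeta hw) -> /(isolation_eq hzeta hw') -> i j.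
  by rewrite !mxE; have := H i j v; rewrite /P => ->.
rewrite B; split.
  move=> [s H]; exists s.
  have HF F : is_face w F = is_face w' (s @: F).
    rewrite (face_facet hzeta hw) (face_facet hzeta hw').
    apply/existsP/existsP => [[G /andP [HG sFG]] | [G' /andP [HG' sFG']]].
      by exists (s @: G); rewrite -H HG subS.
    exists ((s^-1)%g @: G'); rewrite H imK HG' /=.
    by rewrite -(subS s) imK.
  move=> i j h.
  by rewrite -(face3 hzeta hw) -(face3 hzeta hw') HF !imsetU !imset_set1.
move=> [s H]; exists s.
have HF F : is_face w F = is_face w' (s @: F).
  apply/(faceP hzeta hw)/(faceP hzeta hw') => [H1 x y z | H1 i j h Hi Hj Hh].
    move=> /imsetP [i Hi ->] /imsetP [j Hj ->] /imsetP [h Hh ->].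
    by rewrite -H; apply: H1.
  by rewrite H; apply: H1; rewrite mem_imset //; exact: perm_inj.
move=> F; rewrite /is_facet HF; congr (_ && _).
apply/forallP/forallP => [H1 G' | H1 G].
  have := H1 ((s^-1)%g @: G'); rewrite HF imK -(eqS s) imK.
  by rewrite -(subS s) imK.
by have := H1 (s @: G); rewrite -HF subS eqS.
Qed.
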